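(* Assume job sizes are exponentially distributed with mean 1. Fix a server $s\in\mathcal{S}$, multipliers $\nu_j\in\mathbb{R}$ ($j\in\mathcal{J}_s$) and $\eta_{j,s}\in\mathbb{R}$. Let $g^*$ be the maximal long-run average reward of the single-server problem (SP$_s$) below. Then there exists a policy $\phi^*$ maximizing (SP$_s$) such that for every $j\in\mathcal{J}_s$ and every $n\in\mathcal{C}_{k(s)}$, $$\alpha^{\phi^*}_{j,s}(n)=\begin{cases}1,&\text{if }\frac{\nu_j}{\lambda_j}<V^{g^*}_s(n+1)-V^{g^*}_s(n),\\ 1\text{ or }0,&\text{if }\frac{\nu_j}{\lambda_j}=V^{g^*}_s(n+1)-V^{g^*}_s(n),\\ 0,&\text{otherwise.}\end{cases}$$
   Context: Setting: job types $j\in\mathcal{J}$ with Poisson arrival rates $\lambda_j>0$; server $s$ belongs to group $k=k(s)$, serves by processor sharing at total rate $\mu_k>0$ when nonempty, holds at most $B_k\ge1$ jobs, and consumes power $\varepsilon_k$ when nonempty and $\varepsilon^0_k$ when empty ($\varepsilon_k>\varepsilon^0_k\ge0$); $\mathcal{J}_s$ is the set of job types server $s$ may serve. $\mathcal{B}_k=\{0,\dots,B_k\}$, $\mathcal{C}_k=\{0,\dots,B_k-1\}$. $e^*\in\mathbb{R}$ is a fixed constant (the optimal energy efficiency of the farm), $f^r_k(n)=f^\mu_k(n)-e^*f^\varepsilon_k(n)$ with $f^\mu_k(0)=0$, $f^\varepsilon_k(0)=\varepsilon^0_k$, $f^\mu_k(n)=\mu_k$, $f^\varepsilon_k(n)=\varepsilon_k$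 for $n>0$. Single-server problem (SP$_s$): a stationary policy chooses $\alpha_{j,s}(n)\in[0,1]$ for $j\in\mathcal{J}_s$, $n\in\mathcal{B}_k$; the server state is then a birth–death chain on $\mathcal{B}_k$ with upward rate $\sum_{j\in\mathcal{J}_s}\lambda_j\alpha_{j,s}(n)$ and downward rate $\mu_k$ in states $n\ge1$. With steady-state distribution $\pi_s$, (SP$_s$) maximizes $\sum_{n\in\mathcal{B}_k}\pi_s(n)\bigl(f^r_k(n)-\sum_{j\in\mathcal{J}_s}\nu_j\alpha_{j,s}(n)-\mathbf{1}\{n=B_k\}\sum_{j\in\mathcal{J}_s}\eta_{j,s}\alpha_{j,s}(B_k)\bigr)$. For $g\in\mathbb{R}$, define the reward rate in state $n$ under actions $\alpha$ as $\tilde f^g(n)=f^r_k(n)-g-\sum_{j\in\mathcal{J}_s}\nu_j\alpha_{j,s}(n)$ for $n\in\mathcal{C}_k$ and $f^r_k(n)-g-\sum_{j\in\mathcal{J}_s}(\nu_j+\eta_{j,s})\alpha_{j,s}(n)$ for $n=B_k$; $V^g_s(n)$ is the maximum, over stationary policies with $\sum_{j\in\mathcal{J}_s}\alpha_{j,s}(0)>0$, of the expected cumulative $\tilde f^g$-reward accumulated starting from state $n$ until the chain first enters state $0$, with $V^g_s(0)=0$. *)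

(* Defs.v *)
From Stdlib Require Import Reals Lra Lia Arith.
Open Scope R_scope.

(* Job types of server s: J_s is represented by the indices j < m.
   Server states: n in B_k = {0,...,B}; C_k = {0,...,B-1}. *)

Fixpoint sumN (k : nat) (f : nat -> R) : R :=
  match k with
  | O => 0
  | S k' => sumN k' f + f k'
  end.

(* f^r_k(n) = f^mu_k(n) - e* f^eps_k(n) *)
Definition fr (mu eps eps0 estar : R) (n : nat) : R :=
  match n with
  | O => 0 - estar * eps0
  | S _ => mu - estar * eps
  end.

Definition admissible (m B : nat) (alpha : nat -> nat -> R) : Prop :=
  forall j n, (j < m)%nat -> (n <= B)%nat -> 0 <= alpha j n <= 1.

Definition uprate (m : nat) (lam : nat -> R) (alpha : nat -> nat -> R) (n : nat) : R :=
  sumN m (fun j => lam j * alpha j n).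

Definition outrate (m B : nat) (lam : nat -> R) (mu : R) (alpha : nat -> nat -> R)
    (n : nat) : R :=
  (if Nat.ltb n B then uprate m lam alpha n else 0) +
  (if Nat.leb 1 n then mu else 0).

Definition gen (m B : nat) (lam : nat -> R) (mu : R) (alpha : nat -> nat -> R)
    (n n' : nat) : R :=
  if andb (Nat.eqb n' (S n)) (Nat.ltb n B) then uprate m lam alpha n
  else if Nat.eqb (S n') n then mu
  else if Nat.eqb n' n then - outrate m B lam mu alpha n
  else 0.

Definition stationary (m B : nat) (lam : nat -> R) (mu : R)
    (alpha : nat -> nat -> R) (pi : nat -> R) : Prop :=
  (forall n, (n <= B)%nat -> 0 <= pi n) /\
  sumN (S B) pi = 1 /\
  (forall n', (n' <= B)%nat ->
     sumN (S B) (fun n => pi n * gen m B lam mu alpha n n') = 0).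

Definition sp_reward (m B : nat) (mu eps eps0 estar : R) (nu eta : nat -> R)
    (alpha : nat -> nat -> R) (n : nat) : R :=
  fr mu eps eps0 estar n
  - sumN m (fun j => nu j * alpha j n)
  - (if Nat.eqb n B then sumN m (fun j => eta j * alpha j B) else 0).

Definition sp_objective (m B : nat) (mu eps eps0 estar : R) (nu eta : nat -> R)
    (alpha : nat -> nat -> R) (pi : nat -> R) : R :=
  sumN (S B) (fun n => pi n * sp_reward m B mu eps eps0 estar nu eta alpha n).

Definition is_opt_value (m B : nat) (lam : nat -> R) (mu eps eps0 estar : R)
    (nu eta : nat -> R) (g : R) : Prop :=
  (exists alpha pi, admissible m B alpha /\ stationary m B lam mu alpha pi /\
      sp_objective m B mu eps eps0 estar nu eta alpha pi = g) /\
  (forall alpha pi, admissible m B alpha -> stationary m B lam mu alpha pi ->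
      sp_objective m B mu eps eps0 estar nu eta alpha pi <= g).

Definition ftilde (m B : nat) (mu eps eps0 estar : R) (nu eta : nat -> R)
    (g : R) (alpha : nat -> nat -> R) (n : nat) : R :=
  sp_reward m B mu eps eps0 estar nu eta alpha n - g.

(* W(n) = expected cumulative tilde f^g-reward from n until first entering 0,
   characterised by first-step (Dynkin) equations of the absorbing chain:
   W(0) = 0 and tilde f^g(n) + sum_n' Q(n,n') W(n') = 0 for 1 <= n <= B. *)
Definition cum_reward (m B : nat) (lam : nat -> R) (mu eps eps0 estar : R)
    (nu eta : nat -> R) (g : R) (alpha : nat -> nat -> R) (W : nat -> R) : Prop :=
  W O = 0 /\
  forall n, (1 <= n <= B)%nat ->
    ftilde m B mu eps eps0 estar nu eta g alpha n
    + sumN (S B) (fun n' => gen m B lam mu alpha n n' * W n') = 0.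

Definition V_admissible (m B : nat) (alpha : nat -> nat -> R) : Prop :=
  admissible m B alpha /\ sumN m (fun j => alpha j O) > 0.

Definition is_value_fn (m B : nat) (lam : nat -> R) (mu eps eps0 estar : R)
    (nu eta : nat -> R) (g : R) (V : nat -> R) : Prop :=
  V O = 0 /\
  forall n, (1 <= n <= B)%nat ->
    (forall alpha W, V_admissible m B alpha ->
        cum_reward m B lam mu eps eps0 estar nu eta g alpha W -> W n <= V n) /\
    (exists alpha W, V_admissible m B alpha /\
        cum_reward m B lam mu eps eps0 estar nu eta g alpha W /\ W n = V n).

(* Main.v *)
Require Import Defs.
From Stdlib Require Import Reals Lra Lia Arith.
Open Scope R_scope.

Lemma sumN_plus k f g : sumN k (fun i => f i + g i) = sumN k f + sumN k g.
Proof. induction k; simpl; [ring| rewrite IHk; ring]. Qed.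
Lemma sumN_scal k c f : sumN k (fun i => c * f i) = c * sumN k f.
Proof. induction k; simpl; [ring| rewrite IHk; ring]. Qed.
Lemma sumN_ext k f g : (forall i, (i < k)%nat -> f i = g i) -> sumN k f = sumN k g.
Proof. induction k; simpl; intros H; [ring|]. rewrite IHk by (intros; apply H; lia). rewrite H by lia. ring. Qed.
Lemma sumN_le k f g : (forall i, (i < k)%nat -> f i <= g i) -> sumN k f <= sumN k g.
Proof. induction k; simpl; intros H; [lra|]. pose proof (IHk ltac:(intros; apply H; lia)). pose proof (H k ltac:(lia)). lra. Qed.
Lemma sumN_zero k f : (forall i, (i < k)%nat -> f i = 0) -> sumN k f = 0.
Proof. intros H. rewrite (sumN_ext k f (fun _ => 0)) by auto. clear H. induction k; simpl; [ring| rewrite IHk; ring]. Qed.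
Lemma sumN_nonneg k f : (forall i, (i < k)%nat -> 0 <= f i) -> 0 <= sumN k f.
Proof. intros H. replace 0 with (sumN k (fun _ => 0)) by (apply sumN_zero; auto). apply sumN_le; auto. Qed.
Lemma sumN_shift k f : sumN (S k) f = f O + sumN k (fun i => f (S i)).
Proof. induction k; simpl in *; [ring|]. rewrite IHk. ring. Qed.
Lemma sumN_swap a b (f : nat -> nat -> R) :
  sumN a (fun i => sumN b (fun j => f i j)) = sumN b (fun j => sumN a (fun i => f i j)).
Proof. induction a; simpl. - symmetry; apply sumN_zero; auto. - rewrite IHa, <- sumN_plus. reflexivity. Qed.
Lemma sumN_ind k p f : sumN k (fun i => if Nat.eqb i p then f i else 0) = if Nat.ltb p k then f p else 0.
Proof. induction k; simpl. - destruct p; reflexivity.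
  - rewrite IHk. destruct (Nat.eqb_spec k p), (Nat.ltb_spec p k), (Nat.ltb_spec p (S k)); subst; try (exfalso; lia); ring. Qed.
Lemma sumN_one m : sumN m (fun _ => 1) = INR m.
Proof. induction m; [reflexivity|]. rewrite S_INR. simpl. rewrite IHm. ring. Qed.

Lemma Qform m B lam mu al (h : nat -> R) n : (n <= B)%nat ->
  sumN (S B) (fun n' => gen m B lam mu al n n' * h n') =
  (if Nat.ltb n B then uprate m lam al n * (h (S n) - h n) else 0) +
  (if Nat.leb 1 n then mu * (h (pred n) - h n) else 0).
Proof.
  intros Hn.
  rewrite (sumN_ext _ _ (fun n' =>
     (if Nat.eqb n' (S n) then (if Nat.ltb n B then uprate m lam al n else 0) * h n' else 0) +
     (if Nat.eqb n' (pred n) then (if Nat.leb 1 n then mu else 0) * h n' else 0) +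
     (if Nat.eqb n' n then - outrate m B lam mu al n * h n' else 0))).
  2:{ intros i _. unfold gen.
      destruct (Nat.eqb_spec i (S n)), (Nat.ltb_spec n B), (Nat.eqb_spec (S i) n),
        (Nat.eqb_spec i n), (Nat.eqb_spec i (pred n)), (Nat.leb_spec 1 n); simpl;
        subst; try (exfalso; lia); ring. }
  rewrite !sumN_plus, !sumN_ind.
  unfold outrate.
  destruct (Nat.ltb_spec n B), (Nat.ltb_spec (S n) (S B)), (Nat.ltb_spec (pred n) (S B)),
    (Nat.ltb_spec n (S B)), (Nat.leb_spec 1 n); try (exfalso; lia); ring.
Qed.

Lemma Bform m B lam mu al (pi : nat -> R) n' : (n' <= B)%nat ->
  sumN (S B) (fun n => pi n * gen m B lam mu al n n') =
  (if Nat.leb 1 n' then pi (pred n') * uprate m lam al (pred n') else 0) +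
  (if Nat.ltb n' B then pi (S n') * mu else 0) - pi n' * outrate m B lam mu al n'.
Proof.
  intros Hn.
  rewrite (sumN_ext _ _ (fun n =>
     (if Nat.eqb n (pred n') then (if Nat.leb 1 n' then pi n * uprate m lam al n else 0) else 0) +
     (if Nat.eqb n (S n') then pi n * mu else 0) +
     (if Nat.eqb n n' then - pi n * outrate m B lam mu al n else 0))).
  2:{ intros i Hi. unfold gen.
      destruct (Nat.eqb_spec n' (S i)), (Nat.ltb_spec i B), (Nat.eqb_spec (S n') i),
        (Nat.eqb_spec n' i), (Nat.eqb_spec i (pred n')), (Nat.leb_spec 1 n'), (Nat.eqb_spec i (S n')),
        (Nat.eqb_spec i n'); simpl;
        subst; try (exfalso; lia); ring. }
  rewrite !sumN_plus, !sumN_ind.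
  destruct (Nat.ltb_spec n' B), (Nat.ltb_spec (S n') (S B)), (Nat.ltb_spec (pred n') (S B)),
    (Nat.ltb_spec n' (S B)), (Nat.leb_spec 1 n'); try (exfalso; lia); ring.
Qed.

Lemma stat_pos0 m B lam mu al pi : (1 <= B)%nat -> 0 < mu ->
  stationary m B lam mu al pi -> 0 < pi O.
Proof.
  intros HB Hmu [Hnn [Hsum Hbal]].
  destruct (Rlt_or_le 0 (pi O)) as [H|H]; [exact H|exfalso].
  assert (H0 : pi O = 0) by (pose proof (Hnn O ltac:(lia)); lra).
  assert (Hall : forall k, (k <= B)%nat -> forall i, (i <= k)%nat -> pi i = 0).
  { induction k; intros Hk i Hi.
    - replace i with O by lia. exact H0.
    - destruct (Nat.eq_dec i (S k)) as [->|Hne]; [|apply IHk; lia].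
      pose proof (Hbal k ltac:(lia)) as Hb. rewrite Bform in Hb by lia.
      rewrite (IHk ltac:(lia) k ltac:(lia)) in Hb.
      destruct (Nat.ltb_spec k B); [|exfalso; lia].
      destruct (Nat.leb_spec 1 k).
      + rewrite (IHk ltac:(lia) (pred k) ltac:(lia)) in Hb.
        assert (Hz : pi (S k) * mu = 0) by lra.
        apply Rmult_integral in Hz. lra.
      + assert (Hz : pi (S k) * mu = 0) by lra.
        apply Rmult_integral in Hz. lra. }
  rewrite sumN_zero in Hsum. lra. intros i Hi. apply (Hall B); lia.
Qed.

Fixpoint pp (u : nat -> R) (mu : R) (n : nat) : R :=
  match n with O => 1 | S k => pp u mu k * u k / mu end.

Lemma pp_nonneg u mu n : 0 < mu -> (forall k, 0 <= u k) -> 0 <= pp u mu n.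
Proof.
  intros Hmu Hu. induction n; simpl; [lra|].
  apply Rmult_le_pos; [apply Rmult_le_pos; auto|]. left; apply Rinv_0_lt_compat; lra.
Qed.

Lemma exists_stat m B lam mu al : 0 < mu ->
  (forall n, 0 <= uprate m lam al n) ->
  exists pi, stationary m B lam mu al pi.
Proof.
  intros Hmu Hu.
  set (u := uprate m lam al).
  set (Z := sumN (S B) (pp u mu)).
  assert (HZ : 1 <= Z).
  { unfold Z. rewrite sumN_shift. change (pp u mu 0) with 1.
    pose proof (sumN_nonneg B (fun i => pp u mu (S i)) ltac:(intros; apply pp_nonneg; auto)). lra. }
  exists (fun n => pp u mu n / Z). split; [|split].
  - intros n _. apply Rmult_le_pos; [apply pp_nonneg; auto|]. left; apply Rinv_0_lt_compat; lra.
  - unfold Rdiv. rewrite (sumN_ext _ _ (fun i => / Z * pp u mu i)) by (intros; ring).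
    rewrite sumN_scal. fold Z. field. lra.
  - intros n' Hn'. rewrite Bform by lia. unfold outrate. fold u.
    destruct n' as [|k]; simpl pred.
    + destruct (Nat.ltb_spec 0 B); simpl; [|ring]. field. split; lra.
    + destruct (Nat.ltb_spec (S k) B); simpl; field; split; lra.
Qed.

Lemma obj_ident m B lam mu eps eps0 estar nu eta al pi (h : nat -> R) g :
  stationary m B lam mu al pi ->
  sp_objective m B mu eps eps0 estar nu eta al pi - g =
  sumN (S B) (fun n => pi n * (sp_reward m B mu eps eps0 estar nu eta al n - g +
     sumN (S B) (fun n' => gen m B lam mu al n n' * h n'))).
Proof.
  intros [Hnn [Hsum Hbal]].
  rewrite (sumN_ext _ _ (fun n => pi n * sp_reward m B mu eps eps0 estar nu eta al n
     + (-g) * pi n + sumN (S B) (fun n' => pi n * gen m B lam mu al n n' * h n'))).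
  2:{ intros i _.
      rewrite (sumN_ext _ (fun n' => pi i * gen m B lam mu al i n' * h n')
                 (fun n' => pi i * (gen m B lam mu al i n' * h n'))) by (intros; ring).
      rewrite sumN_scal. ring. }
  rewrite !sumN_plus, sumN_scal, Hsum, sumN_swap.
  rewrite (sumN_zero (S B) (fun j => sumN (S B) (fun i => pi i * gen m B lam mu al i j * h j))).
  - unfold sp_objective. ring.
  - intros j Hj. rewrite (sumN_ext _ _ (fun i => h j * (pi i * gen m B lam mu al i j))) by (intros; ring).
    rewrite sumN_scal, (Hbal j ltac:(lia)). ring.
Qed.

Definition qv (m B : nat) (lam : nat -> R) (mu eps eps0 estar : R) (nu eta : nat -> R)
  (g : R) (n : nat) (a : nat -> R) (x : R) : R :=
  fr mu eps eps0 estar n - sumN m (fun j => nu j * a j)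
  - (if Nat.eqb n B then sumN m (fun j => eta j * a j) else 0) - g
  + (if Nat.ltb n B then sumN m (fun j => lam j * a j) * x else 0).

Definition greedy (B : nat) (lam nu eta : nat -> R) (n : nat) (x : R) (j : nat) : R :=
  if Nat.ltb n B then (if Rlt_dec (nu j / lam j) x then 1 else 0)
  else (if Rlt_dec (nu j + eta j) 0 then 1 else 0).

Lemma sumN_minus k f g : sumN k (fun i => f i - g i) = sumN k f - sumN k g.
Proof. induction k; simpl; [ring| rewrite IHk; ring]. Qed.

Lemma qv_greedy m B lam mu eps eps0 estar nu eta g n a x :
  (n <= B)%nat -> (forall j, (j < m)%nat -> 0 < lam j) ->
  (forall j, (j < m)%nat -> 0 <= a j <= 1) ->
  qv m B lam mu eps eps0 estar nu eta g n a x <=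
  qv m B lam mu eps eps0 estar nu eta g n (greedy B lam nu eta n x) x.
Proof.
  intros Hn Hlam Ha. unfold qv.
  destruct (Nat.ltb_spec n B), (Nat.eqb_spec n B); try (exfalso; lia).
  - assert (E : forall b : nat -> R, sumN m (fun j => lam j * b j) * x - sumN m (fun j => nu j * b j)
          = sumN m (fun j => b j * (lam j * x - nu j))).
    { intros b. rewrite Rmult_comm, <- sumN_scal, <- sumN_minus. apply sumN_ext; intros; ring. }
    assert (sumN m (fun j => a j * (lam j * x - nu j)) <=
            sumN m (fun j => greedy B lam nu eta n x j * (lam j * x - nu j))).
    { apply sumN_le. intros j Hj. unfold greedy.
      destruct (Nat.ltb_spec n B); [|exfalso; lia].
      pose proof (Hlam j Hj). pose proof (Ha j Hj).
      assert (nu j = nu j / lam j * lam j) by (field; lra).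
      set (q := nu j / lam j) in *.
      destruct (Rlt_dec q x).
      + assert (0 < lam j * x - nu j) by nra. nra.
      + assert (lam j * x - nu j <= 0) by nra. nra. }
    pose proof (E a). pose proof (E (greedy B lam nu eta n x)). lra.
  - subst n.
    assert (E : forall b : nat -> R, - sumN m (fun j => nu j * b j) - sumN m (fun j => eta j * b j)
          = sumN m (fun j => b j * (- (nu j + eta j)))).
    { intros b. rewrite <- (Rminus_0_l (sumN _ _)). rewrite <- (sumN_zero m (fun _ => 0)) by auto.
      rewrite <- !sumN_minus. apply sumN_ext; intros; ring. }
    assert (sumN m (fun j => a j * (- (nu j + eta j))) <=
            sumN m (fun j => greedy B lam nu eta B x j * (- (nu j + eta j)))).
    { apply sumN_le. intros j Hj. unfold greedy. rewrite Nat.ltb_irrefl.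
      pose proof (Ha j Hj).
      destruct (Rlt_dec (nu j + eta j) 0); nra. }
    pose proof (E a). pose proof (E (greedy B lam nu eta B x)). lra.
Qed.

Lemma qv_mono m B lam mu eps eps0 estar nu eta g n a x y :
  (forall j, (j < m)%nat -> 0 < lam j) -> (forall j, (j < m)%nat -> 0 <= a j) -> x <= y ->
  qv m B lam mu eps eps0 estar nu eta g n a x <= qv m B lam mu eps eps0 estar nu eta g n a y.
Proof.
  intros Hlam Ha Hxy. unfold qv. destruct (Nat.ltb n B); [|lra].
  assert (0 <= sumN m (fun j => lam j * a j)).
  { apply sumN_nonneg. intros j Hj. pose proof (Hlam j Hj); pose proof (Ha j Hj). nra. }
  nra.
Qed.

Lemma qv_B m B lam mu eps eps0 estar nu eta g a x y :
  qv m B lam mu eps eps0 estar nu eta g B a x = qv m B lam mu eps eps0 estar nu eta g B a y.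
Proof. unfold qv. rewrite Nat.ltb_irrefl. reflexivity. Qed.

Lemma lemA m B lam mu eps eps0 estar nu eta g al (h : nat -> R) n : (n <= B)%nat ->
  sp_reward m B mu eps eps0 estar nu eta al n - g +
    sumN (S B) (fun n' => gen m B lam mu al n n' * h n') =
  qv m B lam mu eps eps0 estar nu eta g n (fun j => al j n) (h (S n) - h n) +
    (if Nat.leb 1 n then mu * (h (pred n) - h n) else 0).
Proof.
  intros Hn. rewrite Qform by exact Hn. unfold sp_reward, qv, uprate.
  destruct (Nat.eqb_spec n B) as [->|]; [rewrite Nat.ltb_irrefl; ring|]. destruct (Nat.ltb n B); ring.
Qed.

Definition Fx (m B : nat) (lam : nat -> R) (mu eps eps0 estar : R) (nu eta : nat -> R)
  (g : R) (n : nat) (x : R) : R :=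
  qv m B lam mu eps eps0 estar nu eta g n (greedy B lam nu eta n x) x / mu.

Fixpoint Dk (m B : nat) (lam : nat -> R) (mu eps eps0 estar : R) (nu eta : nat -> R)
  (g : R) (k : nat) : R :=
  match k with
  | O => Fx m B lam mu eps eps0 estar nu eta g B 0
  | S k' => Fx m B lam mu eps eps0 estar nu eta g (B - S k') (Dk m B lam mu eps eps0 estar nu eta g k')
  end.

Definition Dstar (m B : nat) (lam : nat -> R) (mu eps eps0 estar : R) (nu eta : nat -> R)
  (g : R) (n : nat) : R := Dk m B lam mu eps eps0 estar nu eta g (B - n).

Lemma Dstar_eq m B lam mu eps eps0 estar nu eta g n : (n <= B)%nat ->
  Dstar m B lam mu eps eps0 estar nu eta g n =
  Fx m B lam mu eps eps0 estar nu eta g n (Dstar m B lam mu eps eps0 estar nu eta g (S n)).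
Proof.
  intros Hn. unfold Dstar.
  destruct (Nat.eq_dec n B) as [->|Hne].
  - rewrite Nat.sub_diag. replace (B - S B)%nat with O by lia.
    assert (HF : forall x y, Fx m B lam mu eps eps0 estar nu eta g B x = Fx m B lam mu eps eps0 estar nu eta g B y).
    { intros x y. unfold Fx, greedy. rewrite Nat.ltb_irrefl.
      rewrite (qv_B _ _ _ _ _ _ _ _ _ _ _ x y). reflexivity. }
    exact (HF 0 _).
  - replace (B - n)%nat with (S (B - S n)) by lia. simpl Dk.
    replace (B - S (B - S n))%nat with n by lia. reflexivity.
Qed.

Theorem lemma1 (m B : nat) (lam : nat -> R) (mu eps eps0 estar : R)
    (nu eta : nat -> R) (gstar : R) (V : nat -> R) :
  (1 <= B)%nat ->
  (forall j, (j < m)%nat -> 0 < lam j) ->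
  0 < mu ->
  0 <= eps0 -> eps0 < eps ->
  is_opt_value m B lam mu eps eps0 estar nu eta gstar ->
  is_value_fn m B lam mu eps eps0 estar nu eta gstar V ->
  exists phi,
    admissible m B phi /\
    (exists pi, stationary m B lam mu phi pi /\
       sp_objective m B mu eps eps0 estar nu eta phi pi = gstar) /\
    (forall j n, (j < m)%nat -> (n < B)%nat ->
       (nu j / lam j < V (S n) - V n -> phi j n = 1) /\
       (nu j / lam j = V (S n) - V n -> phi j n = 1 \/ phi j n = 0) /\
       (nu j / lam j > V (S n) - V n -> phi j n = 0)).
Proof.
  intros HB Hlam Hmu He0 He [[a0 [pi0 [Ha0 [Hs0 Hobj0]]]] Hopt] [HV0 HV].
  set (D := Dstar m B lam mu eps eps0 estar nu eta gstar).
  set (phi := fun j n => greedy B lam nu eta n (D (S n)) j).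
  set (h := fun n => sumN n (fun k => D (S k))).
  set (qv' := qv m B lam mu eps eps0 estar nu eta gstar).
  assert (Hgr01 : forall n x j, 0 <= greedy B lam nu eta n x j <= 1).
  { intros n x j. unfold greedy. destruct (Nat.ltb n B);
    [destruct (Rlt_dec (nu j / lam j) x)|destruct (Rlt_dec (nu j + eta j) 0)]; lra. }
  assert (Hadm : admissible m B phi) by (intros j n _ _; apply Hgr01).
  assert (Hm : (0 < m)%nat).
  { destruct (HV 1%nat ltac:(lia)) as [_ [al [W [[_ Hpos] _]]]].
    destruct m; [simpl in Hpos; lra|lia]. }
  assert (Hh : forall n, h (S n) - h n = D (S n)) by (intros; unfold h; simpl; ring).
  assert (HDeq : forall n, (1 <= n <= B)%nat -> qv' n (fun j => phi j n) (D (S n)) = mu * D n).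
  { intros n Hn. unfold D at 2. rewrite Dstar_eq by lia. unfold Fx. fold D. fold qv'. change (greedy B lam nu eta n (D (S n))) with (fun j => phi j n). field. lra. }
  assert (Hstep1 : forall al W, admissible m B al ->
            cum_reward m B lam mu eps eps0 estar nu eta gstar al W ->
            forall n, (1 <= n <= B)%nat -> W n - W (pred n) <= D n).
  { intros al W Hal [HW0 HW].
    assert (forall k n, (1 <= n <= B)%nat -> (B - n)%nat = k -> W n - W (pred n) <= D n).
    { induction k; intros n Hn Hk.
      all: pose proof (HW n Hn) as Hc; unfold ftilde in Hc; rewrite lemA in Hc by lia.
      all: destruct (Nat.leb_spec 1 n); [|exfalso; lia].
      all: assert (Hq : qv' n (fun j => al j n) (W (S n) - W n) <= qv' n (fun j => al j n) (D (S n))).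
      1: { replace n with B by lia. unfold qv'. rewrite (qv_B _ _ _ _ _ _ _ _ _ _ _ _ (D (S B))). lra. }
      2: { apply qv_mono; auto. intros j Hj. apply (Hal j n Hj); lia.
           apply (IHk (S n)); simpl; lia. }
      all: pose proof (qv_greedy m B lam mu eps eps0 estar nu eta gstar n (fun j => al j n) (D (S n))
              ltac:(lia) Hlam ltac:(intros j Hj; apply Hal; lia)) as Hg.
      all: fold qv' in Hg; change (greedy B lam nu eta n (D (S n))) with (fun j => phi j n) in Hg;
           rewrite HDeq in Hg by lia; fold qv' in Hc.
      all: assert (mu * (W n - W (pred n)) <= mu * D n) by lra.
      all: apply Rmult_le_reg_l with mu; lra. }
    intros n Hn. apply (H (B - n)%nat); auto. }
  assert (Hstep1b : forall al W, admissible m B al ->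
            cum_reward m B lam mu eps eps0 estar nu eta gstar al W ->
            forall n, (n <= B)%nat -> W n <= h n).
  { intros al W Hal HW. induction n; intros Hn.
    - destruct HW as [HW0 _]. rewrite HW0. unfold h; simpl; lra.
    - pose proof (Hstep1 al W Hal HW (S n) ltac:(lia)). simpl pred in H.
      pose proof (Hh n). pose proof (IHn ltac:(lia)). lra. }
  set (phi' := fun j n => if Nat.eqb n 0 then 1 else phi j n).
  assert (Hphi'V : V_admissible m B phi').
  { split.
    - intros j n _ _. unfold phi'. destruct (Nat.eqb n 0); [lra|apply Hgr01].
    - unfold phi'. simpl. rewrite sumN_one. apply lt_0_INR. exact Hm. }
  assert (Hcum : cum_reward m B lam mu eps eps0 estar nu eta gstar phi' h).
  { split; [reflexivity|]. intros n Hn. unfold ftilde. rewrite lemA by lia.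
    destruct n as [|n0]; [exfalso; lia|].
    change (fun j => phi' j (S n0)) with (fun j => phi j (S n0)).
    fold qv'. rewrite Hh, HDeq by lia. simpl Nat.leb. simpl pred.
    pose proof (Hh n0). cbv iota. replace (h n0 - h (S n0)) with (- D (S n0)) by lra. ring. }
  assert (HVh : forall n, (n <= B)%nat -> V n = h n).
  { intros n Hn. destruct n as [|n0]; [rewrite HV0; reflexivity|].
    destruct (HV (S n0) ltac:(lia)) as [Hup [al [W [[Hal _] [HW HWn]]]]].
    pose proof (Hup phi' h Hphi'V Hcum).
    pose proof (Hstep1b al W Hal HW (S n0) Hn). lra. }
  assert (Hegen : forall al pi, stationary m B lam mu al pi ->
     sp_objective m B mu eps eps0 estar nu eta al pi - gstar =
     sumN (S B) (fun n => pi n * (qv' n (fun j => al j n) (D (S n)) -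
                                   (if Nat.leb 1 n then mu * D n else 0)))).
  { intros al pi Hs. rewrite (obj_ident m B lam mu eps eps0 estar nu eta al pi h gstar Hs).
    apply sumN_ext. intros n Hn. rewrite lemA by lia. rewrite Hh. fold qv'.
    destruct n; simpl; [ring|].
    replace (h n - h (S n)) with (- D (S n)) by (pose proof (Hh n); lra). ring. }
  set (c := qv' 0%nat (fun j => phi j 0%nat) (D 1%nat)).
  assert (Hphi_up : forall n, 0 <= uprate m lam phi n).
  { intros n. unfold uprate. apply sumN_nonneg. intros j Hj.
    pose proof (Hlam j Hj). pose proof (Hgr01 n (D (S n)) j). unfold phi. nra. }
  destruct (exists_stat m B lam mu phi Hmu Hphi_up) as [pi Hpi].
  assert (Hobjphi : sp_objective m B mu eps eps0 estar nu eta phi pi - gstar = pi 0%nat * c).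
  { rewrite Hegen by exact Hpi. rewrite sumN_shift. rewrite sumN_zero.
    - simpl. fold c. ring.
    - intros i Hi. rewrite HDeq by lia. simpl. ring. }
  assert (Hobja0 : 0 <= pi0 0%nat * c).
  { assert (E0 : sp_objective m B mu eps eps0 estar nu eta a0 pi0 - gstar = 0) by lra.
    rewrite Hegen in E0 by exact Hs0. rewrite sumN_shift in E0.
    assert (Hrest : sumN B (fun i => pi0 (S i) * (qv' (S i) (fun j => a0 j (S i)) (D (S (S i))) -
               (if Nat.leb 1 (S i) then mu * D (S i) else 0))) <= 0).
    { rewrite <- (sumN_zero B (fun _ => 0)) by auto. apply sumN_le. intros i Hi.
      pose proof (qv_greedy m B lam mu eps eps0 estar nu eta gstar (S i) (fun j => a0 j (S i)) (D (S (S i)))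
              ltac:(lia) Hlam ltac:(intros j Hj; apply Ha0; lia)) as Hg.
      fold qv' in Hg; change (greedy B lam nu eta (S i) (D (S (S i)))) with (fun j => phi j (S i)) in Hg.
      rewrite HDeq in Hg by lia. simpl Nat.leb. cbv iota.
      destruct Hs0 as [Hnn _]. pose proof (Hnn (S i) ltac:(lia)). nra. }
    pose proof (qv_greedy m B lam mu eps eps0 estar nu eta gstar 0 (fun j => a0 j 0%nat) (D 1%nat)
              ltac:(lia) Hlam ltac:(intros j Hj; apply Ha0; lia)) as Hg.
    fold qv' in Hg; change (greedy B lam nu eta 0 (D 1%nat)) with (fun j => phi j 0%nat) in Hg.
    fold c in Hg. simpl Nat.leb in E0, Hrest. cbv iota in E0, Hrest.
    destruct Hs0 as [Hnn _]. pose proof (Hnn 0%nat ltac:(lia)). nra. }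
  pose proof (stat_pos0 _ _ _ _ _ _ HB Hmu Hs0) as Hp0.
  pose proof (stat_pos0 _ _ _ _ _ _ HB Hmu Hpi) as Hp.
  pose proof (Hopt phi pi Hadm Hpi) as Hle.
  assert (Hc : c = 0) by nra.
  exists phi. split; [exact Hadm|]. split.
  { exists pi. split; [exact Hpi|]. rewrite Hc in Hobjphi. lra. }
  intros j n Hj Hn.
  rewrite (HVh (S n)) by lia. rewrite (HVh n) by lia. rewrite Hh.
  unfold phi, greedy. destruct (Nat.ltb_spec n B); [|exfalso; lia].
  destruct (Rlt_dec (nu j / lam j) (D (S n))); repeat split; intros; try lra; auto.
Qed.
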